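(* For $n\ge1$ let $G_n$ be the number of domino tilings of $C_4\times P_n$. Let $g_n$ be the number of domino tilings of the graph obtained from $C_4\times P_n$ by deleting two adjacent vertices of the end copy $C_4\times\{1\}$, together with their incident edges. Then $$G_n=2G_{n-1}+G_{n-2}+4g_{n-1}\quad(n\ge3),\qquad g_n=G_{n-1}+g_{n-1}\quad(n\ge2).$$ Both sequences satisfy $x_n=3x_{n-1}+3x_{n-2}-x_{n-3}$ for $n\ge4$. For all $n\ge1$, $$g_n=\frac1{12}\Big[(1+\sqrt3)(2+\sqrt3)^n+(1-\sqrt3)(2-\sqrt3)^n\Big]-\frac16(-1)^n .$$
   Context: $H\times K$ denotes the Cartesian product of graphs. $P_n$ is the path with vertex set $\{1,\dots,n\}$ and $C_4$ is the $4$-cycle. For a graph $H$, the subgraph $H\times\{1\}$ of $H\times P_n$ is called its end copy. A domino tiling of a finite graph is a perfect matching, and ''number of domino tilings'' means the number of perfect matchings. *)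

(* Defs.v *)
From HB Require Import structures.
From mathcomp Require Import all_boot all_order all_algebra.
Set Implicit Arguments. Unset Strict Implicit. Unset Printing Implicit Defensive.

Definition perfect_matching (T : finType) (adj : rel T) (S : {set T})
    (M : {set {set T}}) : bool :=
  [forall e in M, exists u, exists v,
      [&& e == [set u; v], adj u v, u \in S & v \in S]] &&
  [forall x in S, #|[set e in M | x \in e]| == 1%N].

Definition num_pm (T : finType) (adj : rel T) (S : {set T}) : nat :=
  #|[set M : {set {set T}} | perfect_matching adj S M]|.

(* C4 x P_n : vertex (i, k) with i in Z/4 (cycle position), k in {0..n-1}
   (layer k corresponds to the path vertex k+1). *)
Definition cp_vertex (n : nat) : finType := ('I_4 * 'I_n)%type.

Definition cp_adj (n : nat) : rel (cp_vertex n) :=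
  fun u v =>
    ((val u.2 == val v.2) &&
       ((((val u.1).+1 %% 4) == val v.1) || (((val v.1).+1 %% 4) == val u.1)))
    || ((val u.1 == val v.1) &&
       (((val u.2).+1 == val v.2) || ((val v.2).+1 == val u.2))).

Definition G (n : nat) : nat := num_pm (@cp_adj n) [set: cp_vertex n].

Definition g (n : nat) : nat :=
  num_pm (@cp_adj n) [set x : cp_vertex n | ~~ ((val x.2 == 0%N) && (val x.1 <= 1)%N)].

(* Main.v *)
Require Import Defs.
From HB Require Import structures.
From mathcomp Require Import all_boot all_order all_algebra zify ring lra.
Import Order.TTheory GRing.Theory Num.Theory.
Set Implicit Arguments. Unset Strict Implicit. Unset Printing Implicit Defensive.

Section PM.
Variables (T : finType) (adj : rel T).
Hypothesis adj_irr : irreflexive adj.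
Hypothesis adj_sym : symmetric adj.

Lemma card1_eq (X : finType) (A : {set X}) a b :
  #|A| = 1 -> a \in A -> b \in A -> a = b.
Proof. by move/eqP/cards1P=> [z ->]; rewrite !inE => /eqP -> /eqP ->. Qed.

Lemma pm_edge S M e : perfect_matching adj S M -> e \in M ->
  exists u v, [/\ e = [set u; v], adj u v, u \in S & v \in S].
Proof.
case/andP=> /forallP H _ eM; move/implyP: (H e) => /(_ eM).
by case/existsP=> u /existsP [v /and4P [/eqP -> ? ? ?]]; exists u, v.
Qed.

Lemma pm_cover S M z : perfect_matching adj S M -> z \in S ->
  #|[set e in M | z \in e]| = 1.
Proof. by case/andP=> _ /forallP H zS; move/implyP: (H z) => /(_ zS) /eqP. Qed.

Lemma pm_sub S M e z : perfect_matching adj S M -> e \in M -> z \in e -> z \in S.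
Proof.
move=> pm eM; case: (pm_edge pm eM) => u [v [-> _ uS vS]].
by rewrite !inE => /orP [] /eqP ->.
Qed.

Lemma pm_uniq S M z e1 e2 : perfect_matching adj S M -> z \in S ->
  e1 \in M -> e2 \in M -> z \in e1 -> z \in e2 -> e1 = e2.
Proof.
move=> pm zS e1M e2M z1 z2; apply: (card1_eq (pm_cover pm zS)); by rewrite inE ?e1M ?e2M.
Qed.

Lemma set2_inj x : injective (fun y : T => [set x; y]).
Proof.
move=> y y' E.
have : y \in [set x; y'] by rewrite -E set22.
have : y' \in [set x; y] by rewrite E set22.
rewrite !inE => /orP [] /eqP -> /orP [] /eqP //.
Qed.

Definition PMS S := [set M | perfect_matching adj S M].

Section Expand.
Variables (S : {set T}) (x y : T).
Hypotheses (xS : x \in S) (yS : y \in S) (axy : adj x y).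
Let e := [set x; y].
Let S' := S :\ x :\ y.

Lemma xney : x != y.
Proof. by apply/eqP=> E; move: axy; rewrite E adj_irr. Qed.

Lemma pm_add M' : perfect_matching adj S' M' -> perfect_matching adj S (e |: M').
Proof.
move=> pm'; apply/andP; split.
  apply/forallP=> e'; apply/implyP; rewrite in_setU1 => /orP [/eqP -> |e'M].
    by apply/existsP; exists x; apply/existsP; exists y; rewrite eqxx axy xS yS.
  case: (pm_edge pm' e'M) => u [v [-> auv uS vS]].
  apply/existsP; exists u; apply/existsP; exists v; rewrite eqxx auv.
  by move: uS vS; rewrite !inE => /and3P [_ _ ->] /and3P [_ _ ->].
apply/forallP=> z; apply/implyP=> zS.
case zS': (z \in S').
  rewrite -(pm_cover pm' zS'); apply/eqP; apply: eq_card => e'; rewrite !inE.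
  case E: (e' == e); last by [].
  move/eqP: E => ->.
  have -> : (z \in e) = false by move: zS'; rewrite /e /S' !inE; case: (z == y); case: (z == x).
  by rewrite !andbF.
apply/cards1P; exists e; apply/setP=> e'; rewrite !inE.
apply/idP/idP.
  case/andP=> /orP [//|e'M] ze; by rewrite (pm_sub pm' e'M ze) in zS'.
move=> /eqP ->; rewrite eqxx /=.
move: zS' zS; rewrite /e /S' !inE; case: (z == y) => /=; case: (z == x) => /= //; by move=> ->.
Qed.

Lemma e_notin M' : perfect_matching adj S' M' -> e \notin M'.
Proof.
move=> pm'; apply/negP=> eM; have := pm_sub pm' eM (set21 x y).
by rewrite !inE eqxx andbF.
Qed.

Lemma pm_del Z : perfect_matching adj S Z -> e \in Z -> perfect_matching adj S' (Z :\ e).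
Proof.
move=> pm eZ; apply/andP; split.
  apply/forallP=> e'; apply/implyP; rewrite in_setD1 => /andP [ne e'Z].
  case: (pm_edge pm e'Z) => u [v [E auv uS vS]].
  have nin : forall w, w \in e' -> w \in e -> False.
    move=> w we' we; have wS := pm_sub pm eZ we.
    by move: ne; rewrite (pm_uniq pm wS e'Z eZ we' we) eqxx.
  apply/existsP; exists u; apply/existsP; exists v; rewrite E eqxx auv /=.
  rewrite !inE uS vS !andbT.
  apply/andP; split; apply/andP; split; apply/negP => /eqP W;
  [apply: (nin u) | apply: (nin u) | apply: (nin v) | apply: (nin v)];
  by rewrite ?E ?W !inE eqxx ?orbT.
apply/forallP=> z; apply/implyP=> zS'.
have zS : z \in S by move: zS'; rewrite !inE => /and3P [].
rewrite -(pm_cover pm zS); apply/eqP; apply: eq_card => e'; rewrite !inE.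
case E: (e' == e); last by [].
move/eqP: E => ->.
have -> : (z \in e) = false by move: zS'; rewrite /e /S' !inE; case: (z == y); case: (z == x).
by rewrite !andbF.
Qed.

Lemma card_fix : #|[set M in PMS S | e \in M]| = #|PMS S'|.
Proof.
symmetry; rewrite -(@card_in_imset _ _ (fun M => e |: M) (PMS S')); last first.
  move=> M1 M2; rewrite !inE => p1 p2 E.
  by rewrite -(setU1K (e_notin p1)) -(setU1K (e_notin p2)) E.
apply: eq_card=> Z; rewrite [in RHS]inE; apply/imsetP/idP.
  by case=> M'; rewrite inE => pm' ->; rewrite inE pm_add // setU11.
case/andP; rewrite inE => pm eZ; exists (Z :\ e); first by rewrite inE pm_del.
by rewrite setD1K.
Qed.

End Expand.

Lemma expand (S : {set T}) x : x \in S ->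
  #|PMS S| = \sum_(y in S | adj x y) #|PMS (S :\ x :\ y)|.
Proof.
move=> xS.
transitivity (\sum_(y in S | adj x y) #|[set M in PMS S | [set x; y] \in M]|);
  last by apply: eq_bigr => y /andP [yS axy]; apply: card_fix.
under eq_bigr do rewrite -sum1_card.
rewrite (exchange_big_dep (mem (PMS S))) /=; last by move=> y M _; rewrite inE => /andP [].
rewrite -sum1_card; apply: eq_bigr => M pm; rewrite inE in pm.
symmetry.
have -> : \sum_(y | (y \in S) && adj x y && (M \in [set M0 in PMS S | [set x; y] \in M0])) 1 =
          #|[set y | (y \in S) && adj x y && ([set x; y] \in M)]|.
  by rewrite -sum1_card; apply: eq_bigl => y; rewrite !inE pm.
rewrite -(card_imset _ (@set2_inj x)) -(pm_cover pm xS).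
apply: eq_card => e'; rewrite [in RHS]inE; apply/imsetP/andP.
  by case=> y; rewrite inE => /andP [_ ?] ->; rewrite set21.
case=> e'M xe'; case: (pm_edge pm e'M) => u [v [E auv uS vS]].
move: xe'; rewrite E !inE => /orP [] /eqP X; subst x.
  by exists v; rewrite // inE auv vS -E e'M.
exists u; last by rewrite setUC.
by rewrite inE adj_sym auv uS /= setUC -E.
Qed.

Lemma pm_empty : #|PMS set0| = 1.
Proof.
apply/eqP/cards1P; exists set0; apply/setP=> M; rewrite !inE.
apply/idP/idP.
  move=> pm; apply/eqP/setP=> e; rewrite inE; apply/negP=> eM.
  by case: (pm_edge pm eM) => u [v [_ _]]; rewrite inE.
move/eqP->; apply/andP; split; apply/forallP=> z; apply/implyP; by rewrite inE.
Qed.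

End PM.


Section Iso.
Variables (T T' : finType) (adj : rel T) (adj' : rel T') (h : T -> T').
Variables (S : {set T}) (S' : {set T'}).
Hypotheses (hinj : injective h) (hadj : forall u v, adj' (h u) (h v) = adj u v).
Hypotheses (hS : forall x, (h x \in S') = (x \in S))
           (hsurj : forall y, y \in S' -> exists x, h x = y).

Let H := fun e : {set T} => h @: e.
Let Hinj : injective H := imset_inj hinj.

Lemma H2 u v : H [set u; v] = [set h u; h v].
Proof. by rewrite /H imsetU1 imset_set1. Qed.

Lemma Hmem w e : (h w \in H e) = (w \in e).
Proof. by rewrite /H mem_imset. Qed.

Lemma iso : #|PMS adj' S'| = #|PMS adj S|.
Proof.
rewrite -(card_imset (PMS adj S) (imset_inj Hinj)).
apply: eq_card => Z; rewrite inE; apply/idP/imsetP.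
- move=> pm.
  have rng : forall E, E \in Z -> exists u v, [/\ E = H [set u; v], adj u v, u \in S & v \in S].
    move=> E EZ; case: (pm_edge pm EZ) => u' [v' [-> a uS vS]].
    case: (hsurj uS) => u hu; case: (hsurj vS) => v hv; subst u' v'.
    by exists u, v; rewrite H2 -hadj -!hS.
  exists (H @^-1: Z).
    rewrite inE; apply/andP; split.
      apply/forallP=> e; apply/implyP; rewrite inE => eZ.
      case: (rng _ eZ) => u [v [E a uS vS]].
      apply/existsP; exists u; apply/existsP; exists v.
      by rewrite (Hinj E) eqxx a uS vS.
    apply/forallP=> w; apply/implyP=> wS.
    have hwS : h w \in S' by rewrite hS.
    rewrite -(pm_cover pm hwS) -(card_imset _ Hinj).
    apply/eqP; apply: eq_card => E; rewrite [in RHS]inE.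
    apply/imsetP/andP.
      by case=> e; rewrite !inE => /andP [eZ we] ->; rewrite eZ Hmem.
    case=> EZ hwE; case: (rng _ EZ) => u [v [E' _ _ _]].
    by exists [set u; v]; rewrite // !inE -E' EZ /=; move: hwE; rewrite E' Hmem !inE.
  apply/setP=> E; apply/idP/imsetP.
    by move=> EZ; case: (rng _ EZ) => u [v [E' _ _ _]]; exists [set u; v]; rewrite // inE -E'.
  by case=> e; rewrite inE => eZ ->.
- case=> M; rewrite inE => pm ->; apply/andP; split.
    apply/forallP=> E; apply/implyP => /imsetP [e eM ->].
    case: (pm_edge pm eM) => u [v [-> a uS vS]].
    apply/existsP; exists (h u); apply/existsP; exists (h v).
    by rewrite H2 eqxx hadj a !hS uS vS.
  apply/forallP=> z; apply/implyP=> zS.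
  case: (hsurj zS) => w hw; subst z; rewrite hS in zS.
  rewrite -(pm_cover pm zS) -(card_imset _ Hinj).
  apply/eqP; apply: eq_card => E; rewrite [in LHS]inE.
  apply/andP/imsetP.
    case=> /imsetP [e eM ->]; rewrite Hmem => we.
    by exists e; rewrite // inE eM.
  case=> e; rewrite inE => /andP [eM we] ->.
  rewrite Hmem we; split => //; apply/imsetP; exists e => //.
Qed.
End Iso.


Definition o (i : nat) (H : i < 4) : 'I_4 := Ordinal H.
Definition V n (i k : nat) (Hi : i < 4) (Hk : k < n) : cp_vertex n := (Ordinal Hi, Ordinal Hk).
Notation vv n i k := (@V n i k isT isT).

Lemma cp_irr n : irreflexive (@cp_adj n).
Proof.
move=> [[[|[|[|[|i]]]] Hi] [k Hk]] //; rewrite /cp_adj /= eqxx /=; by elim: k {Hk}.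
Qed.

Lemma cp_sym n : symmetric (@cp_adj n).
Proof.
move=> u v; rewrite /cp_adj (eq_sym (val u.2)) (eq_sym (val u.1)).
by rewrite (orbC ((val u.1).+1 %% 4 == val v.1)) (orbC ((val u.2).+1 == val v.2)).
Qed.

Lemma expand_list n (S : {set cp_vertex n}) x (ys : seq (cp_vertex n)) :
 x \in S -> uniq ys -> (forall y, (y \in S) && cp_adj x y = (y \in ys)) ->
 #|PMS (@cp_adj n) S| = \sum_(y <- ys) #|PMS (@cp_adj n) (S :\ x :\ y)|.
Proof.
move=> xS u H; rewrite (expand (@cp_sym n) xS) big_uniq //.
by apply: eq_bigl => y; rewrite -H.
Qed.

Definition rot (r : nat) (i : 'I_4) : 'I_4 := Ordinal (ltn_pmod (i + r) (isT : 0 < 4)).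
Definition sh1 m r (x : cp_vertex m) : cp_vertex m.+1 :=
  (rot r x.1, @Ordinal m.+1 (val x.2).+1 (ltn_ord x.2)).

Lemma iso_sh m r (S : {set cp_vertex m}) (S' : {set cp_vertex m.+1}) : r < 4 ->
 (forall x, (sh1 r x \in S') = (x \in S)) -> (forall y, y \in S' -> val y.2 != 0) ->
 #|PMS (@cp_adj m.+1) S'| = #|PMS (@cp_adj m) S|.
Proof.
move=> r4 hS h0; apply: (iso (h := sh1 r)) => //.
- move=> [i [k Hk]] [j [l Hl]] /eqP; rewrite xpair_eqE => /andP [E1 E2].
  move: E1 E2; case: r r4 {hS} => [|[|[|[|r]]]] // _;
  case: i => [[|[|[|[|i]]]] Hi] //; case: j => [[|[|[|[|j]]]] Hj] //= _ E2;
  by move/eqP/(congr1 val): E2 => /= [E]; subst l; congr pair; apply: val_inj.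
- move=> [[i Hi] [k Hk]] [[j Hj] [l Hl]].
  case: r r4 {hS} => [|[|[|[|r]]]] // _;
  case: i Hi => [|[|[|[|i]]]] Hi //; case: j Hj => [|[|[|[|j]]]] Hj //.
- move=> [i [[|k] Hk]] yS; first by have := h0 _ yS.
  exists (rot (4 - r) i, @Ordinal m k Hk).
  apply/eqP; rewrite xpair_eqE; apply/andP; split; last by apply/eqP; apply: val_inj.
  case: r r4 {hS} => [|[|[|[|r]]]] // _; case: i {yS} => [[|[|[|[|i]]]] Hi] //.
Qed.



Definition Sg m := [set x : cp_vertex m | ~~ ((val x.2 == 0) && (val x.1 <= 1))].

Ltac dec := move=> [[[|[|[|[|?]]]] ?] [[|[|?]] ?]]; rewrite ?inE //=.

Ltac side := try (by dec); try (by rewrite !inE).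

Section Rec.
Variable n : nat.
Local Notation v i k := (vv n.+2 i k).
Local Notation P S := #|PMS (@cp_adj n.+2) S|.

Lemma br_a : P (setT :\ v 0 0 :\ v 1 0) = G n.+1 + g n.+1.
Proof.
rewrite (expand_list (x := v 2 0) (ys := [:: v 3 0; v 2 1])) //; side.
rewrite !big_cons big_nil addn0.
rewrite (iso_sh (r := 0) (S := setT)) //; side.
congr (_ + _).
rewrite (expand_list (x := v 3 0) (ys := [:: v 3 1])) //; side.
rewrite !big_cons big_nil addn0.
rewrite (iso_sh (r := 2) (S := Sg n.+1)) //; side.
Qed.

Lemma br_b : P (setT :\ v 0 0 :\ v 3 0) = G n.+1 + g n.+1.
Proof.
rewrite (expand_list (x := v 1 0) (ys := [:: v 2 0; v 1 1])) //; side.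
rewrite !big_cons big_nil addn0.
rewrite (iso_sh (r := 0) (S := setT)) //; side.
congr (_ + _).
rewrite (expand_list (x := v 2 0) (ys := [:: v 2 1])) //; side.
rewrite !big_cons big_nil addn0.
rewrite (iso_sh (r := 1) (S := Sg n.+1)) //; side.
Qed.

Lemma br_c : P (setT :\ v 0 0 :\ v 0 1) = 2 * g n.+1 + G n.
Proof.
rewrite (expand_list (x := v 1 0) (ys := [:: v 2 0; v 1 1])) //; side.
rewrite !big_cons big_nil addn0 mul2n -addnn -addnA.
congr (_ + _).
  rewrite (expand_list (x := v 3 0) (ys := [:: v 3 1])) //; side.
  rewrite !big_cons big_nil addn0.
  rewrite (iso_sh (r := 3) (S := Sg n.+1)) //; side.
rewrite (expand_list (x := v 2 0) (ys := [:: v 3 0; v 2 1])) //; side.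
rewrite !big_cons big_nil addn0.
rewrite (iso_sh (r := 0) (S := Sg n.+1)) //; side.
congr (_ + _).
rewrite (expand_list (x := v 3 0) (ys := [:: v 3 1])) //; side.
rewrite !big_cons big_nil addn0.
rewrite (iso_sh (r := 0) (S := [set x : cp_vertex n.+1 | val x.2 != 0])) //; side.
rewrite (iso_sh (r := 0) (S := setT)) //; side.
Qed.

Lemma Grec : G n.+2 = 2 * G n.+1 + G n + 4 * g n.+1.
Proof.
change (P setT = 2 * G n.+1 + G n + 4 * g n.+1).
rewrite (expand_list (x := v 0 0) (ys := [:: v 1 0; v 3 0; v 0 1])) //; side.
rewrite !big_cons big_nil addn0 br_a br_b br_c.
lia.
Qed.

Lemma grec : g n.+2 = G n.+1 + g n.+1.
Proof.
change (P (Sg n.+2) = G n.+1 + g n.+1).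
rewrite (expand_list (x := v 2 0) (ys := [:: v 3 0; v 2 1])) //; side.
rewrite !big_cons big_nil addn0.
rewrite (iso_sh (r := 0) (S := setT)) //; side.
congr (_ + _).
rewrite (expand_list (x := v 3 0) (ys := [:: v 3 1])) //; side.
rewrite !big_cons big_nil addn0.
rewrite (iso_sh (r := 2) (S := Sg n.+1)) //; side.
Qed.
End Rec.

Lemma e0 m (S : {set cp_vertex m}) : S = set0 -> #|PMS (@cp_adj m) S| = 1.
Proof. by move->; apply: pm_empty. Qed.

Lemma G0 : G 0 = 1.
Proof. by apply: e0; apply/setP; case=> ? []. Qed.

Lemma G1 : G 1 = 2.
Proof.
change (#|PMS (@cp_adj 1) setT| = 2).
rewrite (expand_list (x := vv 1 0 0) (ys := [:: vv 1 1 0; vv 1 3 0])) //; side.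
rewrite !big_cons big_nil addn0.
rewrite (expand_list (x := vv 1 2 0) (ys := [:: vv 1 3 0])) //; side.
rewrite (expand_list (x := vv 1 1 0) (ys := [:: vv 1 2 0])) //; side.
rewrite !big_cons !big_nil !addn0 !e0 //; apply/setP; dec.
Qed.

Lemma g1 : g 1 = 1.
Proof.
change (#|PMS (@cp_adj 1) (Sg 1)| = 1).
rewrite (expand_list (x := vv 1 2 0) (ys := [:: vv 1 3 0])) //; side.
rewrite !big_cons !big_nil !addn0 !e0 //; apply/setP; dec.
Qed.


Lemma g_rec3 m : g m.+4 + g m.+1 = 3 * g m.+3 + 3 * g m.+2.
Proof. have := Grec m.+1; have := grec m.+2; have := grec m.+1; have := grec m; lia. Qed.

Lemma G_rec3 m : G m.+3 + G m = 3 * G m.+2 + 3 * G m.+1.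
Proof. have := Grec m.+1; have := Grec m; have := grec m; lia. Qed.

Section Closed.
Local Open Scope ring_scope.
Variable R : rcfType.
Let s : R := Num.sqrt 3%:R.
Definition X (n : nat) : R := (1 + s) * (2%:R + s) ^+ n + (1 - s) * (2%:R - s) ^+ n.
Definition F (n : nat) : R := (1 / 12%:R) * X n - (1 / 6%:R) * (-1) ^+ n.

Lemma ss : s * s = 3%:R.
Proof. by rewrite -expr2 sqr_sqrtr // ler0n. Qed.

Lemma pow2 (r : R) k : r * r = 4%:R * r - 1 -> r ^+ k.+2 = 4%:R * r ^+ k.+1 - r ^+ k.
Proof. by move=> H; rewrite !exprS mulrA H; ring. Qed.

Lemma Xrec k : X k.+2 = 4%:R * X k.+1 - X k.
Proof.
have ha : (2%:R + s) * (2%:R + s) = 4%:R * (2%:R + s) - 1.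
  transitivity (4%:R + 4%:R * s + s * s); first by ring.
  by rewrite ss; ring.
have hb : (2%:R - s) * (2%:R - s) = 4%:R * (2%:R - s) - 1.
  transitivity (4%:R - 4%:R * s + s * s); first by ring.
  by rewrite ss; ring.
by rewrite /X (pow2 _ ha) (pow2 _ hb); ring.
Qed.

Lemma Frec k : F k.+3 = 3%:R * F k.+2 + 3%:R * F k.+1 - F k.
Proof. by rewrite /F (Xrec k.+1) (Xrec k) !exprS; ring. Qed.

Lemma X0 : X 0 = 2%:R. Proof. by rewrite /X; ring. Qed.
Lemma X1 : X 1 = 10%:R.
Proof.
rewrite /X !expr1; transitivity (4%:R + 2%:R * (s * s)); first by ring.
by rewrite ss; ring.
Qed.

Lemma F1 : F 1 = 1.
Proof. by rewrite /F X1; field. Qed.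
Lemma F2 : F 2 = 3%:R.
Proof. by rewrite /F Xrec X1 X0; field. Qed.
Lemma F3 : F 3 = 12%:R.
Proof. by rewrite /F Xrec Xrec X1 X0; field. Qed.

Lemma gF m : (g m.+1)%:R = F m.+1.
Proof.
suff: [/\ (g m.+1)%:R = F m.+1, (g m.+2)%:R = F m.+2 & (g m.+3)%:R = F m.+3] by case.
elim: m => [|m [h1 h2 h3]].
  have e2 : g 2 = 3%N by rewrite grec G1 g1.
  have e3 : g 3 = 12%N by rewrite grec Grec G1 G0 g1 e2.
  by rewrite g1 e2 e3 F1 F2 F3.
split=> //; rewrite Frec -h1 -h2 -h3.
have := g_rec3 m; move/(congr1 (fun k => k%:R : R)); rewrite !natrD => E.
by apply: (addIr (g m.+1)%:R); rewrite E; ring.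
Qed.
End Closed.

Theorem mainTheorem2 :
  (forall n : nat, (3 <= n)%N -> G n = (2 * G n.-1 + G n.-2 + 4 * g n.-1)%N) /\
  (forall n : nat, (2 <= n)%N -> g n = (G n.-1 + g n.-1)%N) /\
  (forall n : nat, (4 <= n)%N ->
      (G n + G (n - 3) = 3 * G n.-1 + 3 * G n.-2)%N) /\
  (forall n : nat, (4 <= n)%N ->
      (g n + g (n - 3) = 3 * g n.-1 + 3 * g n.-2)%N) /\
  (forall (R : rcfType) (n : nat), (1 <= n)%N ->
      (((g n)%:R : R) =
        (1 / 12%:R) * ((1 + Num.sqrt 3%:R) * (2%:R + Num.sqrt 3%:R) ^+ n
                       + (1 - Num.sqrt 3%:R) * (2%:R - Num.sqrt 3%:R) ^+ n)
        - (1 / 6%:R) * (-1) ^+ n)%R).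
Proof.
split; first by move=> [|[|n]] // _; exact: Grec.
split; first by move=> [|[|n]] // _; exact: grec.
split; first by move=> [|[|[|n]]] // _; rewrite !subSS subn0; exact: (G_rec3 n).
split; first by move=> [|[|[|[|n]]]] // _; rewrite !subSS subn0; exact: (g_rec3 n).
by move=> R [|n] // _; exact: gF.
Qed.
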